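(* Let $(T,X)$ be a non-minimal M-dynamic ($T$ a topological group or monoid, $X$ a Hausdorff uniform space, not necessarily compact). Then $(T,X)$ is sensitive to initial conditions on $X$.
   Context: $\mathscr U_X$ is a compatible symmetric uniformity of $X$. $A\subseteq T$ is syndetic if there is compact $K\subseteq T$ with $Kt\cap A\ne\emptyset$ for all $t$. A point $x$ is a.p. if $\{t:tx\in U\}$ is syndetic for every neighborhood $U$ of $x$. The dynamic is topologically transitive if $\{t:V\cap tU\ne\emptyset\}\ne\emptyset$ for all nonempty open $U,V$; it is an M-dynamic if it is topologically transitive with a dense set of a.p. points. Minimal means every orbit is dense. Sensitive to initial conditions on $X$: there is $\varepsilon\in\mathscr U_X$ such that for every $x\in X$ and every neighborhood $U$ of $x$ there exist $y\in U$ and $t\in T$ with $(tx,ty)\notin\varepsilon$. *)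

(* Defs.v *)
From mathcomp Require Import all_boot all_order all_algebra.
From mathcomp Require Import all_classical all_reals all_analysis.
Set Implicit Arguments. Unset Strict Implicit. Unset Printing Implicit Defensive.
Local Open Scope classical_set_scope.

Definition topological_monoid (T : topologicalType) (mul : T -> T -> T) (e : T) :=
  [/\ forall a b c, mul a (mul b c) = mul (mul a b) c,
      forall a, mul e a = a,
      forall a, mul a e = a &
      continuous (fun p : T * T => mul p.1 p.2)].

Definition is_dynamic (T : topologicalType) (X : topologicalType)
  (mul : T -> T -> T) (e : T) (act : T -> X -> X) :=
  [/\ topological_monoid mul e,
      forall x, act e x = x,
      forall s t x, act (mul s t) x = act s (act t x) &
      continuous (fun p : T * X => act p.1 p.2)].

Definition syndetic (T : topologicalType) (mul : T -> T -> T) (A : set T) :=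
  exists K : set T, compact K /\
    forall t, (fun k => mul k t) @` K `&` A !=set0.

Definition ap_point (T : topologicalType) (X : topologicalType)
  (mul : T -> T -> T) (act : T -> X -> X) (x : X) :=
  forall U : set X, nbhs x U -> syndetic mul [set t | U (act t x)].

Definition top_transitive (T : topologicalType) (X : topologicalType)
  (act : T -> X -> X) :=
  forall U V : set X, open U -> U !=set0 -> open V -> V !=set0 ->
    [set t | V `&` (act t @` U) !=set0] !=set0.

Definition M_dynamic (T : topologicalType) (X : topologicalType)
  (mul : T -> T -> T) (act : T -> X -> X) :=
  top_transitive act /\ dense [set x | ap_point mul act x].

Definition minimal_dynamic (T : topologicalType) (X : topologicalType)
  (act : T -> X -> X) :=
  forall x : X, dense (range (fun t => act t x)).

Definition sensitive (T : topologicalType) (X : uniformType)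
  (act : T -> X -> X) :=
  exists eps : set (X * X),
    [/\ entourage eps, (forall a b, eps (a, b) -> eps (b, a)) &
      forall (x : X) (U : set X), nbhs x U ->
        exists y t, U y /\ ~ eps (act t x, act t y)].

(* Main.v *)
Require Import Defs.
From mathcomp Require Import all_boot all_order all_algebra.
From mathcomp Require Import all_classical all_reals all_analysis.
Local Open Scope classical_set_scope.

Lemma tube_lemma (T : topologicalType) (X : uniformType)
  (f : T * X -> X) (K : set T) (q : X) (E : set (X * X)) :
  continuous f -> compact K -> entourage E ->
  \forall u \near q, forall k, K k -> E (f (k, q), f (k, u)).
Proof.
move=> cf cK eE.
pose E3 := split_ent E.
have eE3 : entourage E3 by exact: entourage_split_ent.
pose G := E3 `&` E3^-1%relation.
have eG : entourage G by exact: entourage_invI.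
have := (proj1 (compact_near_coveringP K)) cK X (nbhs q)
  (fun u k => E (f (k, q), f (k, u))) _.
apply => k Kk.
have /cvg_app_entourageP := cf (k, q).
move=> /(_ G eG) H.
case: H => [[A B] /= [nA nB] AB].
exists (A, B) => //=.
case=> x' i /= [Ax Bi].
have h1 : G (f (k, q), f (x', i)) by exact: (AB (x', i)).
have h2 : G (f (k, q), f (x', q)) by apply: (AB (x', q)); split => //; exact: nbhs_singleton.
apply: (@entourage_split _ (f (k, q))) => //.
  by case: h2.
by case: h1.
Qed.

Lemma act_cont (T : topologicalType) (X : uniformType)
  (mul : T -> T -> T) (e : T) (act : T -> X -> X) t0 :
  is_dynamic mul e act -> continuous (act t0).
Proof.
case=> _ _ _ cj u.
have := @continuous_comp _ _ _ (fun v : X => (t0, v)) (fun p : T * X => act p.1 p.2) u.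
apply; last exact: cj.
apply: cvg_pair; [exact: cvg_cst | exact: cvg_id].
Qed.

Lemma sep_lemma (T : topologicalType) (X : uniformType)
  (mul : T -> T -> T) (e : T) (act : T -> X -> X) :
  is_dynamic mul e act ->
  M_dynamic mul act ->
  ~ minimal_dynamic act ->
  exists delta : set (X * X), entourage delta /\
    forall (x : X) (U : set X), nbhs x U -> exists y1 y2 t,
      [/\ U y1, U y2 & ~ delta (act t y1, act t y2)].
Proof.
move=> dyn [tr dap] nmin.
have [x0 nd] : exists x0, ~ dense (range (fun t => act t x0)).
  by apply: contra_notP nmin => /forallNP H x; apply: contrapT; exact: H.
have [W0 [[w ow] W0r]] := denseNE nd.
have nW0 : nbhs w W0 by exact: open_nbhs_nbhs.
have [D eD DW] : exists2 D, entourage D & xsection D w `<=` W0.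
  by move: nW0 => /nbhsP [D eD DW]; exists D.
pose D1 := split_ent D.
pose D2 := split_ent D1.
pose D3 := split_ent D2.
have eD1 : entourage D1 by exact: entourage_split_ent.
have eD2 : entourage D2 by exact: entourage_split_ent.
have eD3 : entourage D3 by exact: entourage_split_ent.
have notW : forall t, ~ D (w, act t x0).
  move=> t Dwt.
  have : (W0 `&` range (fun t => act t x0)) (act t x0).
    split; last by exists t.
    by apply: DW; apply/xsectionP.
  by rewrite W0r.
exists (D3 `&` D3^-1%relation); split; first exact: entourage_invI.
move=> x U nU.
set U' := U°.
have oU' : open U' by exact: open_interior.
have U'x : U' x by exact: nbhs_singleton (nbhs_interior nU).
have U'U : U' `<=` U by exact: interior_subset.
have [p [U'p app]] : (U' `&` [set x | ap_point mul act x]) !=set0.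
  by apply: dap => //; exists x.
case: (pselect (exists t0, D1 (w, act t0 p))) => [[t0 D1t0]|nt0].
-
  pose V := U `&` [set u | D3 (act t0 p, act t0 u)].
  have nV : nbhs p V.
    apply: filterI; first by apply: (@filterS _ _ _ U'); [exact: U'U| exact: open_nbhs_nbhs].
    have := @act_cont _ _ _ _ _ t0 dyn p.
    move=> /cvg_app_entourageP /(_ D3 eD3).
    by [].
  have [K [cK HK]] := app V nV.
  pose f := fun pr : T * X => act t0 (act pr.1 pr.2).
  have cf : continuous f.
    move=> pr; apply: (@continuous_comp _ _ _ (fun pr : T * X => act pr.1 pr.2) (act t0)).
      by case: dyn => _ _ _ cj; exact: cj.
    exact: (@act_cont _ _ _ _ _ t0 dyn).
  have := @tube_lemma _ _ f K x0 _ cf cK (entourage_inv eD2).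
  move=> nO.
  pose O := [set u | forall k, K k -> (D2^-1)%relation (f (k, x0), f (k, u))]°.
  have Ox0 : O x0 by apply: nbhs_singleton; apply: nbhs_interior; exact: nO.
  have [s [v [Ov [z U'z zv]]]] := tr U' O oU' (ex_intro _ x U'x)
     (@open_interior _ _) (ex_intro _ x0 Ox0).
  have [_ [[k Kk <-] [Vr1 Vr2]]] := HK s.
  have Dk : D2 (f (k, act s z), f (k, x0)).
    have : [set u | forall k, K k -> (D2^-1)%relation (f (k, x0), f (k, u))] v.
      exact: interior_subset.
    by rewrite -zv => /(_ k Kk).
  exists p, z, (mul t0 (mul k s)); split; [exact: U'U | exact: U'U |].
  move=> [/= Dpz _].
  case: dyn => _ _ actM _.
  apply: (notW (mul t0 k)).
  rewrite actM.
  apply: (@entourage_split _ (act t0 p)) => //.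
  apply: (@entourage_split _ (f (k, act s z))); first exact: eD1; last exact: Dk.
  apply: (@entourage_split _ (act (mul t0 (mul k s)) p)); first exact: eD2.
    by rewrite actM; exact: Vr2.
  by move: Dpz; rewrite /f /= !actM.
-
  pose O := (xsection D2 w)°.
  have Ow : O w.
    by apply: nbhs_singleton; apply: nbhs_interior; exact: nbhs_entourage.
  have [t [v [Ov [z U'z zv]]]] := tr U' O oU' (ex_intro _ x U'x)
     (@open_interior _ _) (ex_intro _ w Ow).
  exists p, z, t; split; [exact: U'U | exact: U'U |].
  move=> [_ /= Dzp].
  apply: nt0; exists t.
  apply: (@entourage_split _ (act t z)) => //.
  have : xsection D2 w v by exact: interior_subset.
  by rewrite -zv => /xsectionP.
  by apply: split_ent_subset.
Qed.

Theorem theorem4 (T : topologicalType) (X : uniformType)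
  (mul : T -> T -> T) (e : T) (act : T -> X -> X) :
  hausdorff_space X ->
  is_dynamic mul e act ->
  M_dynamic mul act ->
  ~ minimal_dynamic act ->
  sensitive act.
Proof.
move=> _ dyn Md nmin.
have [delta [edelta H]] := @sep_lemma _ _ _ _ _ dyn Md nmin.
pose S := split_ent delta.
have eS : entourage S by exact: entourage_split_ent.
exists (S `&` S^-1%relation); split.
- exact: entourage_invI.
- by move=> a b [h1 h2]; split.
- move=> x U nU.
  have [y1 [y2 [t [Uy1 Uy2 nd]]]] := H x U nU.
  case: (pselect ((S `&` S^-1%relation) (act t x, act t y1))) => [[_ h1]|h]; last first.
    by exists y1, t.
  exists y2, t; split => // [[h2 _]].
  apply: nd; apply: (@entourage_split _ (act t x)) => //.
Qed.
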